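(* Let $d$ and $m$ be positive integers, let $a_1=(a_{11},\ldots,a_{1k_1}),\ldots,a_m=(a_{m1},\ldots,a_{mk_m})$ be partitions of $d$ of lengths $k_1,\ldots,k_m$, and suppose that $t=k_1+\cdots+k_m-d(m-1)\geq 1$. Then there exist a partition $c=(c_1,\ldots,c_t)$ of $d$ of length $t$ and refinements $r_i:a_i\to c$ ($i=1,\ldots,m$) such that for each $j=1,\ldots,t$, the sum of the lengths of the partitions $r_1^{-1}(c_j),\ldots,r_m^{-1}(c_j)$ of $c_j$ equals $c_j(m-1)+1$.
   Context: A partition of $d$ is a multiset of positive integers summing to $d$; its length is its number of elements. For partitions $a$ and $b$ of $d$, a refinement $r:b\to a$ is a map of multisets such that for each part $a_i$ of $a$, the multiset $r^{-1}(a_i)$ is a partition of $a_i$. *)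

(* Defs.v *)
From mathcomp Require Import all_boot.
Set Implicit Arguments. Unset Strict Implicit. Unset Printing Implicit Defensive.

(* A partition of d: a finite multiset of positive integers summing to d,
   represented as a sequence (order irrelevant). Its length is [size s]. *)
Definition is_partition (d : nat) (s : seq nat) : bool :=
  all (fun x => 0 < x) s && (sumn s == d).

(* Parts of [a] (as a multiset, via their indices) sent by r to the j-th part of c:
   this is the multiset r^{-1}(c_j). *)
Definition preimage (a c : seq nat) (r : 'I_(size a) -> 'I_(size c))
  (j : 'I_(size c)) : seq nat :=
  [seq nth 0 a (val k) | k <- enum 'I_(size a) & r k == j].

Definition is_refinement (a c : seq nat) (r : 'I_(size a) -> 'I_(size c)) : Prop :=
  forall j : 'I_(size c), is_partition (nth 0 c j) (preimage r j).

(* Main.v *)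
Require Import Defs.
From mathcomp Require Import all_boot.
From mathcomp Require Import zify.
Set Implicit Arguments. Unset Strict Implicit. Unset Printing Implicit Defensive.

Lemma size_le_sum (a : seq nat) : all (fun x => 0 < x) a -> size a <= sumn a.
Proof. elim: a => //= x a IH /andP[x0 /IH]; lia. Qed.

Lemma size2_le_sum (a : seq nat) : all (fun x => 1 < x) a -> 2 * size a <= sumn a.
Proof. elim: a => //= x a IH /andP[x0 /IH]; lia. Qed.

Lemma part_size d a : is_partition d a -> size a <= d.
Proof. by case/andP => /size_le_sum h /eqP <-. Qed.

Lemma part_perm d s1 s2 : perm_eq s1 s2 -> is_partition d s1 = is_partition d s2.
Proof. by move=> pe; rewrite /is_partition (perm_sumn pe) (perm_all _ pe). Qed.

Lemma sum_nth (a : seq nat) : \sum_(0 <= p < size a) nth 0 a p = sumn a.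
Proof. by rewrite sumnE [RHS](big_nth 0). Qed.

Lemma sumS n (P : pred nat) F : \sum_(0 <= p < n.+1 | P p) F p =
  (if P 0 then F 0 else 0) + \sum_(0 <= p < n | P p.+1) F p.+1.
Proof. by rewrite big_mkcond big_nat_recl // [in RHS]big_mkcond. Qed.

Lemma incr_sum s i : i < size s -> sumn (incr_nth s i) = (sumn s).+1.
Proof. elim: s i => [|x s IH] [|i] //= h; rewrite ?IH //; lia. Qed.

Lemma sum_part n N (f g w : nat -> nat) j : (forall p, p < n -> f p < N) ->
  \sum_(0 <= p < n | g (f p) == j) w p =
  \sum_(0 <= j' < N | g j' == j) \sum_(0 <= p < n | f p == j') w p.
Proof.
move=> fB.
under [RHS]eq_bigr do rewrite big_mkcond.
rewrite exchange_big /= big_mkcond /=.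
rewrite big_nat_cond [RHS]big_nat_cond.
apply: eq_bigr => p /andP [/andP [_ pn] _].
transitivity (\sum_(0 <= j' < N | j' == f p) (if g (f p) == j then w p else 0)).
  by rewrite big_nat1_eq /= fB.
rewrite big_mkcond [RHS]big_mkcond /=; apply: eq_bigr => j' _.
by case: (eqVneq j' (f p)) => [->|ne] //; case: ifP.
Qed.
Definition Sol2 d (a b c : seq nat) (G H : nat -> nat) : Prop :=
  [/\ is_partition d c /\ size c = size a + size b - d,
   (forall p, p < size a -> G p < size c) /\ (forall q, q < size b -> H q < size c),
   (forall j, j < size c -> \sum_(0 <= p < size a | G p == j) nth 0 a p = nth 0 c j),
   (forall j, j < size c -> \sum_(0 <= q < size b | H q == j) nth 0 b q = nth 0 c j) &
   (forall j, j < size c -> \sum_(0 <= p < size a | G p == j) 1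
        + \sum_(0 <= q < size b | H q == j) 1 = nth 0 c j + 1)].

Lemma sol2_sym d a b c G H : Sol2 d a b c G H -> Sol2 d b a c H G.
Proof.
case=> [[P S] [GB HB] SA SB CN]; split => //; first by rewrite addnC.
by move=> j jc; rewrite addnC CN.
Qed.

Lemma sol2_perm d a a2 b c G2 H : perm_eq a a2 -> Sol2 d a2 b c G2 H ->
  exists G, Sol2 d a b c G H.
Proof.
move=> pa [[P S] [GB HB] SA SB CN].
have sz := perm_size pa.
case/(perm_iotaP 0): pa => Is pIs ea.
have szI : size Is = size a2 by rewrite (perm_size pIs) size_iota.
have key : forall (Q : pred nat) (w : nat -> nat),
  \sum_(0 <= p < size a | Q (nth 0 Is p)) w (nth 0 Is p) = \sum_(0 <= i < size a2 | Q i) w i.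
  move=> Q w; rewrite sz -szI -(big_nth 0) (perm_big _ pIs) /index_iota subn0.
  by rewrite szI.
exists (fun p => G2 (nth 0 Is p)); split => //.
- by rewrite S sz.
- split=> // p pa; apply: GB.
  have : nth 0 Is p \in Is by apply: mem_nth; rewrite szI -sz.
  by rewrite (perm_mem pIs) mem_iota.
- move=> j jc; rewrite -SA // -(key (fun i => G2 i == j)).
  rewrite big_nat_cond [RHS]big_nat_cond; apply: eq_bigr => p /andP [/andP [_ pa] _].
  by rewrite ea (nth_map 0) // szI -sz.
- by move=> j jc; rewrite -CN // -(key (fun i => G2 i == j) (fun _ => 1)).
Qed.

Lemma sum_ones n : \sum_(0 <= p < n) 1 = n.
Proof. by rewrite sum1_size size_iota subn0. Qed.

Lemma sol2_triv d a b : is_partition d a -> is_partition d b ->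
  size a + size b = d.+1 -> Sol2 d a b [:: d] (fun _ => 0) (fun _ => 0).
Proof.
move=> pa pb s.
have d0 : 0 < d by have := part_size pa; have := part_size pb; lia.
split => //.
- by rewrite /is_partition /= d0 addn0 eqxx; split => //; lia.
- by move=> [|j] //= _; rewrite sum_nth; case/andP: pa => _ /eqP.
- by move=> [|j] //= _; rewrite sum_nth; case/andP: pb => _ /eqP.
- move=> [|j] //= _.
  by rewrite !sum_ones s addn1.
Qed.

Lemma step_one d a b :
  (forall a' b', is_partition d.-1 a' -> is_partition d.-1 b' ->
     d.-1 < size a' + size b' -> exists c G H, Sol2 d.-1 a' b' c G H) ->
  is_partition d a -> is_partition d b -> d.+1 < size a + size b -> 1 \in a ->
  exists c G H, Sol2 d a b c G H.
Proof.
move=> IH pa pb hs a1.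
have pe := perm_to_rem a1; set a' := rem 1 a in pe.
suff [c [G [H S]]] : exists c G H, Sol2 d (1 :: a') b c G H.
  by have [G' S'] := sol2_perm pe S; exists c, G', H.
have sa : size a = (size a').+1 by rewrite (perm_size pe).
rewrite (part_perm _ pe) in pa.
move: pa; rewrite /is_partition => /andP [] /andP [_ a'pos] /eqP sd.
have pa' : is_partition d.-1 a' by rewrite /is_partition; apply/andP; split; [exact: a'pos | rewrite -sd].
simpl in sd.
case: b pb hs => [|y b'] pb hs; first by move: pb; rewrite /is_partition => /andP [] _ /eqP /=; lia.
move: pb; rewrite /is_partition => /andP [] /andP [y0 b'pos] /eqP sbd.
case: y y0 sbd hs => [|[|y]] // _ sbd hs.
-
  have pb' : is_partition d.-1 b' by rewrite /is_partition; apply/andP; split; [exact: b'pos | rewrite -sbd].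
  have [c' [G' [H' [[Pc Sc] [GB HB] SA SB CN]]]] := IH a' b' pa' pb' ltac:(rewrite sa /= in hs; lia).
  exists (1 :: c'), (fun p => if p is p'.+1 then (G' p').+1 else 0),
         (fun p => if p is p'.+1 then (H' p').+1 else 0).
  move: Pc; rewrite /is_partition => /andP [] cpos /eqP sc.
  split => //.
  + split; first by rewrite /is_partition /= cpos sc; apply/eqP; lia.
    move=> /=; rewrite sa /= in hs; lia.
  + by split => -[|p] //= h; rewrite ltnS ?GB ?HB.
  + move=> [|j] /= jc; rewrite sumS /=.
      by rewrite big_pred0.
    exact: SA.
  + move=> [|j] /= jc; rewrite sumS /=.
      by rewrite big_pred0.
    exact: SB.
  + move=> [|j] /= jc; rewrite !sumS /=.
      by rewrite !big_pred0.
    exact: CN.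
-
  have pb' : is_partition d.-1 (y.+1 :: b').
    by rewrite /is_partition; apply/andP; split; [exact: b'pos | apply/eqP; rewrite /= in sbd *; lia].
  have [c' [G' [H' [[Pc Sc] [GB HB] SA SB CN]]]] := IH a' _ pa' pb' ltac:(rewrite sa /= in hs; rewrite /=; lia).
  have h0 : H' 0 < size c' by apply: HB.
  exists (incr_nth c' (H' 0)), (fun p => if p is p'.+1 then G' p' else H' 0), H'.
  move: Pc; rewrite /is_partition => /andP [] cpos /eqP sc.
  have szc : size (incr_nth c' (H' 0)) = size c' by rewrite size_incr_nth h0.
  split => //; rewrite ?szc.
  + split; last by rewrite Sc /=; rewrite sa /= in hs; lia.
    rewrite /is_partition incr_sum // sc -sd /= eqxx andbT.
    apply/(all_nthP 0) => j; rewrite szc nth_incr_nth => jc.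
    by have := (all_nthP 0 cpos) j jc; lia.
  + by split => -[|p] //= h; rewrite ?GB ?HB.
  + move=> j jc; rewrite sumS /= SA // nth_incr_nth.
    by case: eqP.
  + move=> j jc; have := SB j jc; rewrite /= !sumS /= nth_incr_nth.
    by case: eqP => _; lia.
  + move=> j jc; have := CN j jc; rewrite /= !sumS /= nth_incr_nth.
    by case: eqP => _; lia.
Qed.

Lemma m2 n d a b : d <= n -> is_partition d a -> is_partition d b ->
  d < size a + size b -> exists c G H, Sol2 d a b c G H.
Proof.
elim: n d a b => [|n IH] d a b dn pa pb hs.
  by have := part_size pa; have := part_size pb; lia.
case: (eqVneq (size a + size b) d.+1) => [e|ne].
  by exists [:: d], (fun _ => 0), (fun _ => 0); apply: sol2_triv.
have hs' : d.+1 < size a + size b by rewrite ltn_neqAle eq_sym ne hs.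
have IH' : forall a' b', is_partition d.-1 a' -> is_partition d.-1 b' ->
     d.-1 < size a' + size b' -> exists c G H, Sol2 d.-1 a' b' c G H.
  by move=> a' b'; apply: IH; lia.
case a1: (1 \in a); first exact: step_one.
case b1: (1 \in b).
  have [c [G [H S]]] : exists c G H, Sol2 d b a c G H.
    by apply: step_one => //; rewrite addnC.
  by exists c, H, G; apply: sol2_sym.
have two : forall s, is_partition d s -> 1 \in s = false -> 2 * size s <= d.
  move=> s; rewrite /is_partition => /andP [spos /eqP <-] s1.
  apply: size2_le_sum; apply/allP => x xs.
  have := allP spos x xs; case: x xs => [|[|x]] // xs.
  by rewrite xs in s1.
have := two a pa a1; have := two b pb b1; lia.
Qed.

Definition Sol d m (A : nat -> seq nat) c (F : nat -> nat -> nat) : Prop :=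
  [/\ is_partition d c, size c = \sum_(0 <= i < m) size (A i) - d * (m - 1),
   (forall i p, i < m -> p < size (A i) -> F i p < size c),
   (forall i j, i < m -> j < size c ->
      \sum_(0 <= p < size (A i) | F i p == j) nth 0 (A i) p = nth 0 c j) &
   (forall j, j < size c ->
      \sum_(0 <= i < m) \sum_(0 <= p < size (A i) | F i p == j) 1 = nth 0 c j * (m - 1) + 1)].

Lemma sol_base d A : is_partition d (A 0) -> Sol d 1 A (A 0) (fun _ p => p).
Proof.
move=> pa; split => //.
- by rewrite big_nat1 muln0 subn0.
- by move=> [|i] p.
- by move=> [|i] j // _ jc; rewrite big_nat1_eq jc.
- by move=> j jc; rewrite big_nat1 big_nat1_eq jc muln0.
Qed.

Lemma part_pos d c : 0 < d -> is_partition d c -> 0 < size c.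
Proof. by case: c => // /[swap] /andP [_ /eqP <-]. Qed.

Lemma compose d m A c' F' c G H : 0 < d -> 0 < m ->
  Sol d m (fun i => A i.+1) c' F' -> Sol2 d c' (A 0) c G H ->
  Sol d m.+1 A c (fun i => if i is i'.+1 then fun p => G (F' i' p) else H).
Proof.
move=> d0 m0 [Pc' Sc' FB' FS' FC'] [[Pc Sc] [GB HB] SA SB CN].
have c'0 := part_pos d0 Pc'; have c0 := part_pos d0 Pc.
split => //.
- move: c0 c'0; rewrite Sc Sc' big_nat_recl //; case: m m0 {FB' FS' FC' Sc'} => // n _.
  rewrite subn1 /= mulnS; lia.
- by move=> [|i] p //= im pA; [apply: HB | apply: GB; apply: FB'].
- move=> [|i] j //= im jc; first exact: SB.
  rewrite ltnS in im.
  rewrite (@sum_part _ (size c') (F' i) G (fun p => nth 0 (A i.+1) p) j (fun p pA => FB' i p im pA)).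
  rewrite -SA // big_nat_cond [RHS]big_nat_cond; apply: eq_bigr => j' /andP [/andP [_ jl] _].
  exact: FS'.
- move=> j jc; rewrite big_nat_recl //=.
  under eq_big_nat => i /andP [_ im].
    rewrite (@sum_part _ (size c') (F' i) G (fun => 1) j (fun p pA => FB' i p im pA)).
  over.
  rewrite /= exchange_big /=.
  rewrite [X in _ + X]big_nat_cond.
  under [X in _ + X]eq_bigr => j' /andP [/andP [_ jl] _] do rewrite FC' //.
  rewrite -[X in _ + X]big_nat_cond big_split /= -big_distrl /= SA //.
  have := CN j jc; case: m m0 {FB' FS' FC' Sc'} => // n _.
  rewrite !subn1 /= mulnS; lia.
Qed.

Lemma gen d : 0 < d -> forall m A, 0 < m ->
  (forall i, i < m -> is_partition d (A i)) ->
  d * (m - 1) < \sum_(0 <= i < m) size (A i) -> exists c F, Sol d m A c F.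
Proof.
move=> d0; elim=> [//|m IH] A _ PA S.
case: (posnP m) => [m0|m0].
  by subst m; exists (A 0), (fun _ p => p); apply: sol_base; apply: PA.
have k0 := part_size (PA 0 isT).
rewrite big_nat_recl // in S.
have [c' [F' Sl]] : exists c' F', Sol d m (fun i => A i.+1) c' F'.
  apply: (IH) => //; first by move=> i im; apply: PA.
  move: S; case: m m0 {IH PA} => // n _; rewrite !subn1 /= mulnS; lia.
have Sl' := Sl; case: Sl' => Pc' Sc' _ _ _.
have [c [G [H S2]]] := m2 (leqnn d) Pc' (PA 0 isT)
  ltac:(move: S; rewrite Sc'; case: m m0 {IH PA Sl Sc'} => // n _; rewrite !subn1 /= mulnS; lia).
exists c, (fun i => if i is i'.+1 then fun p => G (F' i' p) else H).
by apply: compose; eassumption.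
Qed.

Lemma preimageE (a c : seq nat) (F : nat -> nat) (FB : forall k : 'I_(size a), F k < size c)
  (j : 'I_(size c)) :
  preimage (fun k => Ordinal (FB k)) j = [seq nth 0 a p | p <- iota 0 (size a) & F p == j].
Proof.
rewrite /preimage -val_enum_ord filter_map -map_comp.
by congr map; apply: eq_filter => k.
Qed.

Theorem lemma5p6 (d m : nat) (a : 'I_m -> seq nat) :
  0 < d -> 0 < m ->
  (forall i, is_partition d (a i)) ->
  d * (m - 1) < \sum_(i < m) size (a i) ->
  exists c : seq nat,
  exists r : forall i : 'I_m, 'I_(size (a i)) -> 'I_(size c),
    [/\ is_partition d c,
        size c = \sum_(i < m) size (a i) - d * (m - 1),
        forall i, is_refinement (r i) &
        forall j : 'I_(size c),
          \sum_(i < m) size (preimage (r i) j) = nth 0 c j * (m - 1) + 1].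
Proof.
move=> d0 m0 pa hs.
case: m a m0 pa hs => // m a _ pa hs.
pose A := fun i => a (inord i).
have AE : forall i : 'I_m.+1, A i = a i by move=> i; rewrite /A inord_val.
have SE : \sum_(i < m.+1) size (a i) = \sum_(0 <= i < m.+1) size (A i).
  by rewrite big_mkord; apply: eq_bigr => i _; rewrite AE.
have [c [F [Pc Sc FB FS FC]]] := gen d0 (A:=A) (ltn0Sn m) (fun i _ => pa (inord i))
  ltac:(by rewrite -SE).
have FB' : forall (i : 'I_m.+1) (k : 'I_(size (a i))), F i k < size c.
  by move=> i k; apply: FB => //; rewrite AE.
exists c, (fun i k => Ordinal (FB' i k)).
split => //.
- by rewrite SE.
- move=> i j; rewrite preimageE /is_partition; apply/andP; split.
  + apply/allP => x /mapP [p]; rewrite mem_filter mem_iota => /andP [_ /andP [_ pl]] ->.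
    have := pa i; rewrite /is_partition => /andP [/allP ap _]; apply: ap; exact: mem_nth.
  + rewrite sumnE big_map big_filter; apply/eqP.
    have := FS i j (ltn_ord i) (ltn_ord j); rewrite AE => <-.
    by rewrite /index_iota subn0.
- move=> j; rewrite -(FC j (ltn_ord j)) [RHS]big_mkord.
  apply: eq_bigr => i _; rewrite preimageE size_map -sum1_size big_filter AE.
  by rewrite /index_iota subn0.
Qed.
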